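(* With the model and matrices $V(z),U(z)$ as in the context, let $\hat V(z),\hat U(z)$ be the $(s+1)\times(s+1)$ matrices that coincide with $V(z),U(z)$ in columns $0,\dots,s-1$, and whose last column (column $s$) is \[ \hat V_{i,s}=1\ (0\le i<s),\quad \hat V_{s,s}=\bar\alpha;\qquad \hat U_{i,s}=\tilde\lambda\tilde p_a+i\tilde\theta\tilde\mu\ (0\le i<s),\quad \hat U_{s,s}=\tilde\lambda_{ob}+s\tilde\theta\tilde\mu . \] Then for any open set $\Omega\subseteq\mathbb{C}\setminus\{1\}$ and any differentiable row-vector function $\mathbf p:\Omega\to\mathbb{C}^{s+1}$, $\mathbf p'V=\mathbf pU$ on $\Omega$ if and only if $\mathbf p'\hat V=\mathbf p\hat U$ on $\Omega$. In particular the stationary generating function $\mathbf p(z)$ satisfies $\mathbf p'(z)\hat V(z)=\mathbf p(z)\hat U(z)$ for $|z|<1$; equivalently, \[ \sum_{i=0}^{s-1}p_i'(z)+\bar\alpha p_s'(z)=\sum_{i=0}^{s-1}(\tilde\lambda\tilde p_a+i\tilde\theta\tilde\mu)p_i(z)+(\tilde\lambda_{ob}+s\tilde\theta\tilde\mu)p_s(z) \] together with the first $s$ scalar equations of $\mathbf p'V=\mathbf pU$.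
   Context: Parameters: integer $s\ge1$, $\lambda,\mu,\nu>0$, $p_a,\tilde p_a\ge0$ with $p_a+\tilde p_a=1$, $\tilde\alpha_0\in[0,1]$, $p\in[0,1]$, $\bar p=1-p$, $\bar\alpha\in[0,1]$, $\bar\theta,\tilde\theta\ge0$; $\lambda_{ob}=\lambda\tilde\alpha_0$, $\tilde\lambda=\lambda/\nu$, $\tilde\mu=\mu/\nu$, $\tilde\lambda_{ob}=\lambda_{ob}/\nu$. $V(z),U(z)$ are the $(s+1)\times(s+1)$ matrices (indices $0..s$, other entries zero): $V_{i,i}=z-\bar p$, $V_{i,i+1}=-p$ for $i<s$, $V_{s,s}=\bar\alpha(z-1)$; $U_{i,i+1}=\tilde\lambda p_a$ for $i<s$, $U_{i,i-1}=i\tilde\mu(\bar\theta+\tilde\theta z)$ for $1\le i\le s$, $U_{i,i}=\tilde\lambda(z\tilde p_a-1)-i\tilde\mu(\bar\theta+\tilde\theta)$ for $i<s$, $U_{s,s}=\tilde\lambda_{ob}(z-1)-s\tilde\mu(\bar\theta+\tilde\theta)$. The ''stationary generating function'' is $\mathbf p(z)=(p_0,\dots,p_s)$, $p_i(z)=\sum_j\pi_{i,j}z^j$, of the stationary distribution (assumed to exist) of the Markovian multiserver retrial QBD whose level-up block is $A$ ($A_{i,i}=\lambda\tilde p_a$ for $i<s$, $A_{s,s}=\lambda\tilde\alpha_0$, $A_{i,i-1}=i\mu\tilde\theta$), level-$j$ down block $jC$ ($C_{i,i}=\nu\bar p$, $C_{i,i+1}=\nu p$ for $i<s$, $C_{s,s}=\nu\bar\alpha$),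 and diagonal block $B-\tilde A-j\tilde C$ ($B_{i,i+1}=\lambda p_a$, $B_{i,i-1}=i\mu\bar\theta$, rows of $B$ sum to 0; $\tilde A,\tilde C$ diagonal row-sum matrices); it satisfies $\mathbf p'V=\mathbf pU$ on $|z|<1$. *)

(* Defs.v *)
(* Complex numbers are modelled by an arbitrary
   numClosedFieldType C (e.g. algC, or any R[i]). *)
From HB Require Import structures.
From mathcomp Require Import all_boot all_order all_algebra.
Set Implicit Arguments. Unset Strict Implicit. Unset Printing Implicit Defensive.
Import Order.TTheory GRing.Theory Num.Theory.
Local Open Scope ring_scope.

Section Defs.
Variable C : numClosedFieldType.

Definition is_open (Om : C -> Prop) : Prop :=
  forall z, Om z -> exists2 r : C, 0 < r & forall w, `|w - z| < r -> Om w.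

Definition has_derivative_at (Om : C -> Prop) (f : C -> C) (l z : C) : Prop :=
  forall eps : C, 0 < eps -> exists2 d : C, 0 < d &
    forall h : C, 0 < `|h| -> `|h| < d -> Om (z + h) ->
      `|(f (z + h) - f z) / h - l| < eps.

Definition is_deriv_rV (n : nat) (Om : C -> Prop) (p dp : C -> 'rV[C]_n) : Prop :=
  forall z, Om z -> forall j : 'I_n, has_derivative_at Om (fun w => p w 0 j) (dp z 0 j) z.

(* V(z); indices 0..s, pbar = 1 - p. *)
Definition Vmat (s : nat) (p abar z : C) : 'M[C]_(s.+1) :=
  \matrix_(i < s.+1, j < s.+1)
    if (i < s)%N then
      (if j == i :> nat then z - (1 - p)
       else if j == i.+1 :> nat then - p else 0)
    else (if j == s :> nat then abar * (z - 1) else 0).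

Definition Umat (s : nat) (lam mu nu pa tpa ta0 thb tht z : C) : 'M[C]_(s.+1) :=
  let tl := lam / nu in let tm := mu / nu in let tlob := lam * ta0 / nu in
  \matrix_(i < s.+1, j < s.+1)
    if (i < s)%N then
      (if j == i.+1 :> nat then tl * pa
       else if j == i :> nat then tl * (z * tpa - 1) - i%:R * tm * (thb + tht)
       else if j.+1 == i :> nat then i%:R * tm * (thb + tht * z)
       else 0)
    else
      (if j == s :> nat then tlob * (z - 1) - s%:R * tm * (thb + tht)
       else if j.+1 == s :> nat then s%:R * tm * (thb + tht * z)
       else 0).

Definition Vhat (s : nat) (p abar z : C) : 'M[C]_(s.+1) :=
  \matrix_(i < s.+1, j < s.+1)
    if (j < s)%N then Vmat s p abar z i j
    else if (i < s)%N then 1 else abar.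

Definition Uhat (s : nat) (lam mu nu pa tpa ta0 thb tht z : C) : 'M[C]_(s.+1) :=
  let tl := lam / nu in let tm := mu / nu in let tlob := lam * ta0 / nu in
  \matrix_(i < s.+1, j < s.+1)
    if (j < s)%N then Umat s lam mu nu pa tpa ta0 thb tht z i j
    else if (i < s)%N then tl * tpa + i%:R * tht * tm
    else tlob + s%:R * tht * tm.

End Defs.

(* Main.v *)
Require Import Defs.
From HB Require Import structures.
From mathcomp Require Import all_boot all_order all_algebra ring zify.
Import Order.TTheory GRing.Theory Num.Theory.
Local Open Scope ring_scope.

Lemma sum_ind (R : comNzRingType) n a (A : R) :
  \sum_(j < n) (((j : nat) == a)%:R * A) = if (a < n)%N then A else 0.
Proof.
rewrite -(big_mkord xpredT (fun j => ((j == a)%:R * A))).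
elim: n => [|n IH]; first by rewrite big_geq.
rewrite big_nat_recr //= IH.
case: (ltnP a n) => h1.
  have -> : (n == a) = false by apply/eqP; lia.
  by rewrite mul0r addr0 (_ : (a < n.+1)%N) //; lia.
case: (eqVneq n a) => [->|h2]; first by rewrite mul1r add0r ltnSn.
have -> : (a < n.+1)%N = false by lia.
by rewrite mul0r addr0.
Qed.

Lemma sum_indS (R : comNzRingType) n a (A : R) :
  \sum_(j < n) ((((j : nat).+1) == a)%:R * A) = if (0 < a)%N && (a <= n)%N then A else 0.
Proof.
case: a => [|a].
  by rewrite big1 // => j _; rewrite mul0r.
under eq_bigr do rewrite eqSS.
by rewrite sum_ind.
Qed.

Lemma rv_ext (C : numClosedFieldType) s (x y : 'rV[C]_(s.+1)) :
  (forall j : 'I_s.+1, (j < s)%N -> x 0 j = y 0 j) -> x 0 ord_max = y 0 ord_max -> x = y.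
Proof.
move=> H Hm; apply/rowP => j.
case: (ltnP j s) => hj; first by apply: H.
have -> : j = ord_max by apply/val_inj => /=; have := ltn_ord j; lia.
by [].
Qed.

Lemma sum_mul (C : numClosedFieldType) s (a : 'rV[C]_(s.+1)) (M N : 'M[C]_(s.+1)) (c : C) :
  (forall i, \sum_j M i j = c * N i ord_max) ->
  \sum_j (a *m M) 0 j = c * (a *m N) 0 ord_max.
Proof.
move=> H.
under eq_bigr do rewrite mxE.
rewrite exchange_big /= mxE mulr_sumr; apply: eq_bigr => k _.
by rewrite -mulr_sumr H mulrCA.
Qed.

Lemma sum_split (C : numClosedFieldType) s (x : 'rV[C]_(s.+1)) :
  \sum_j x 0 j = \sum_(j < s) x 0 (widen_ord (leqnSn s) j) + x 0 ord_max.
Proof. by rewrite big_ord_recr /=. Qed.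


Section M.
Variable C : numClosedFieldType.
Variables (s : nat) (lam mu nu pa tpa ta0 p abar thb tht z : C).
Hypothesis hs : (1 <= s)%N.
Hypothesis hpatpa : pa + tpa = 1.

Lemma rowV (i : 'I_s.+1) :
  \sum_j Vmat s p abar z i j = (z - 1) * Vhat s p abar z i ord_max.
Proof.
rewrite /Vhat mxE /= ltnn.
case: ifP => hi.
  transitivity (\sum_(j < s.+1) ((((j:nat) == i)%:R * (z - (1 - p))) + (((j:nat) == i.+1)%:R * (- p)))).
    apply: eq_bigr => j _; rewrite mxE hi.
    case: eqP => h1; case: eqP => h2 //; try lia; rewrite /=; ring.
  have h1 : (i < s.+1)%N by [].
  have h2 : (i.+1 < s.+1)%N by rewrite ltnS.
  rewrite big_split /= !sum_ind h1 h2; ring.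
transitivity (\sum_(j < s.+1) ((((j:nat) == s)%:R * (abar * (z - 1))))).
  apply: eq_bigr => j _; rewrite mxE hi.
  case: eqP => h1 /=; ring.
rewrite sum_ind ltnSn; ring.
Qed.

Lemma rowU (i : 'I_s.+1) :
  \sum_j Umat s lam mu nu pa tpa ta0 thb tht z i j = (z - 1) * Uhat s lam mu nu pa tpa ta0 thb tht z i ord_max.
Proof.
rewrite /Uhat mxE /= ltnn.
have epa : pa = 1 - tpa by rewrite -hpatpa; ring.
case: ifP => hi.
  transitivity (\sum_(j < s.+1) ((((j:nat) == i.+1)%:R * (lam / nu * pa)) + (((j:nat) == i)%:R * (lam / nu * (z * tpa - 1) - i%:R * (mu / nu) * (thb + tht))) + ((((j:nat).+1) == i)%:R * (i%:R * (mu/nu) * (thb + tht * z))))).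
    apply: eq_bigr => j _; rewrite mxE hi.
    case: eqP => h1; case: eqP => h2; case: eqP => h3 //; try lia; rewrite /=; ring.
  have h1 : (i < s.+1)%N by [].
  have h2 : (i.+1 < s.+1)%N by rewrite ltnS.
  have h3 : (i <= s.+1)%N by apply: ltnW.
  rewrite !big_split /= !sum_ind sum_indS h1 h2 h3 andbT.
  case: (posnP i) => h0 /=.
    rewrite h0 epa; ring.
  rewrite epa; ring.
transitivity (\sum_(j < s.+1) ((((j:nat) == s)%:R * (lam * ta0 / nu * (z - 1) - s%:R * (mu / nu) * (thb + tht))) + ((((j:nat).+1) == s)%:R * (s%:R * (mu/nu) * (thb + tht * z))))).
  apply: eq_bigr => j _; rewrite mxE hi.
  case: eqP => h1; case: eqP => h2 //; try lia; rewrite /=; ring.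
rewrite big_split /= sum_ind sum_indS ltnSn (_ : (0 < s)%N) // leqnSn /=; ring.
Qed.


Lemma key (a b : 'rV[C]_(s.+1)) : z != 1 ->
  (a *m Vmat s p abar z = b *m Umat s lam mu nu pa tpa ta0 thb tht z <->
   a *m Vhat s p abar z = b *m Uhat s lam mu nu pa tpa ta0 thb tht z).
Proof.
move=> hz.
have hz1 : z - 1 != 0 by rewrite subr_eq0.
have cV : forall j : 'I_s.+1, (j < s)%N -> (a *m Vhat s p abar z) 0 j = (a *m Vmat s p abar z) 0 j.
  by move=> j hj; rewrite !mxE; apply: eq_bigr => k _; rewrite mxE hj.
have cU : forall j : 'I_s.+1, (j < s)%N -> (b *m Uhat s lam mu nu pa tpa ta0 thb tht z) 0 j = (b *m Umat s lam mu nu pa tpa ta0 thb tht z) 0 j.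
  by move=> j hj; rewrite !mxE; apply: eq_bigr => k _; rewrite mxE hj.
have sV := @sum_mul _ _ a _ _ _ rowV.
have sU := @sum_mul _ _ b _ _ _ rowU.
split => H.
  apply: rv_ext => [j hj|]; first by rewrite cV // cU // H.
  apply: (mulfI hz1); by rewrite -sV -sU H.
apply: rv_ext => [j hj|]; first by rewrite -cV // -cU // H.
have : \sum_j (a *m Vmat s p abar z) 0 j = \sum_j (b *m Umat s lam mu nu pa tpa ta0 thb tht z) 0 j.
  by rewrite sV sU H.
rewrite !sum_split.
have -> : \sum_(j < s) (a *m Vmat s p abar z) 0 (widen_ord (leqnSn s) j) =
          \sum_(j < s) (b *m Umat s lam mu nu pa tpa ta0 thb tht z) 0 (widen_ord (leqnSn s) j).
  apply: eq_bigr => j _; have hj : (widen_ord (leqnSn s) j < s)%N by rewrite /= ltn_ord.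
  by rewrite -(cV _ hj) -(cU _ hj) H.
by move/addrI.
Qed.
End M.
Theorem lemma5p2 (C : numClosedFieldType) (s : nat) (lam mu nu pa tpa ta0 p abar thb tht : C)
  (hs : (1 <= s)%N) (hlam : 0 < lam) (hmu : 0 < mu) (hnu : 0 < nu)
  (hpa : 0 <= pa) (htpa : 0 <= tpa) (hpatpa : pa + tpa = 1)
  (hta0 : 0 <= ta0 <= 1) (hp : 0 <= p <= 1) (habar : 0 <= abar <= 1)
  (hthb : 0 <= thb) (htht : 0 <= tht) :
  (* main equivalence *)
  (forall (Om : C -> Prop), is_open Om -> ~ Om 1 ->
   forall (P dP : C -> 'rV[C]_(s.+1)), is_deriv_rV Om P dP ->
     ((forall z, Om z -> dP z *m Vmat s p abar z = P z *m Umat s lam mu nu pa tpa ta0 thb tht z)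
      <->
      (forall z, Om z -> dP z *m Vhat s p abar z = P z *m Uhat s lam mu nu pa tpa ta0 thb tht z)))
  /\
  (* in particular: any P (e.g. the stationary generating function) that
     satisfies P'V = PU on the open unit disc satisfies P' hatV = P hatU there,
     i.e. the explicit scalar equation plus the first s equations of P'V = PU *)
  (forall (P dP : C -> 'rV[C]_(s.+1)),
     is_deriv_rV (fun z => `|z| < 1) P dP ->
     (forall z, `|z| < 1 -> dP z *m Vmat s p abar z = P z *m Umat s lam mu nu pa tpa ta0 thb tht z) ->
     forall z, `|z| < 1 ->
       dP z *m Vhat s p abar z = P z *m Uhat s lam mu nu pa tpa ta0 thb tht z
       /\
       (\sum_(i < s) dP z 0 (widen_ord (leqnSn s) i) + abar * dP z 0 ord_max
        = \sum_(i < s) (lam / nu * tpa + i%:R * tht * (mu / nu)) * P z 0 (widen_ord (leqnSn s) i)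
          + (lam * ta0 / nu + s%:R * tht * (mu / nu)) * P z 0 ord_max)
       /\
       (forall j : 'I_(s.+1), (j < s)%N ->
          (dP z *m Vmat s p abar z) 0 j = (P z *m Umat s lam mu nu pa tpa ta0 thb tht z) 0 j)).
Proof.
have K := fun z => @key C s lam mu nu pa tpa ta0 p abar thb tht z hs hpatpa.
split.
  move=> Om _ hO1 P dP _; split => H z hz.
    apply/K; last exact: H.
    by apply/eqP => e; apply: hO1; rewrite -e.
  apply/K; last exact: H.
  by apply/eqP => e; apply: hO1; rewrite -e.
move=> P dP _ H z hz.
have hz1 : z != 1 by apply/eqP => e; move: hz; rewrite e normr1 ltxx.
have H1 := H z hz.
have H2 : dP z *m Vhat s p abar z = P z *m Uhat s lam mu nu pa tpa ta0 thb tht z.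
  by apply/K.
split=> //; split; last by move=> j _; rewrite H1.
have := congr1 (fun M : 'rV[C]_(s.+1) => M 0 ord_max) H2; rewrite !mxE /= !big_ord_recr /= !mxE /= ltnn.
move=> E; apply: etrans (etrans _ E) _.
  congr (_ + _); last by rewrite mulrC.
  by apply: eq_bigr => i _; rewrite !mxE /= ltnn ltn_ord mulr1.
congr (_ + _); last by rewrite mulrC.
by apply: eq_bigr => i _; rewrite !mxE /= ltnn ltn_ord mulrC.
Qed.
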